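(* Let $X$ be a finite $T_0$ space and $\mathbb{B}(X)=\{U_x\mid x\in X\}$. If $\mathcal{U}\in Cov(X)$ satisfies $\mathcal{U}\ge_C\mathbb{B}(X)$, then $\mathcal{U}$ and $\mathbb{B}(X)$, regarded as finite $T_0$ spaces (posets under inclusion), are homotopy equivalent.
   Context: For a finite topological space $X$ and $x\in X$, $U_x$ is the intersection of all open sets containing $x$. Finite $T_0$ spaces are identified with finite posets (via $x\le y$ iff $U_x\subseteq U_y$; open sets are down-sets), continuous maps with order-preserving maps. Any finite family of sets ordered by inclusion is regarded as a finite poset, hence a finite $T_0$ space. An open cover $\mathcal{U}$ of $X$ is basis-like if whenever $x\in U\cap V$ with $U,V\in\mathcal{U}$ there is $W\in\mathcal{U}$ with $x\in W\subseteq U\cap V$. For a finite $T_0$ space $X$, $Cov(X)$ is the set of all finite basis-like open covers of $X$. For $\mathcal{U},\mathcal{V}\in Cov(X)$ we write $\mathcal{U}\ge_C\mathcal{V}$ iff $\mathcal{U}$ refines $\mathcal{V}$ and there exists a continuous (i.e. inclusion-order-preserving) map $p_{\mathcal{V},\mathcal{U}}:\mathcal{U}\to\mathcal{V}$ with $U\subseteq p_{\mathcal{V},\mathcal{U}}(U)$ for every $U\in\mathcal{U}$. *)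

(* Defs.v *)
From HB Require Import structures.
From mathcomp Require Import all_boot all_order all_algebra.
From mathcomp Require Import all_classical all_reals topology normedtype.
Set Implicit Arguments. Unset Strict Implicit. Unset Printing Implicit Defensive.
Import Order.TTheory GRing.Theory Num.Theory.
Import numFieldNormedType.Exports.
Local Open Scope classical_set_scope.

Definition alex (T : choiceType) (le : rel T) : Type := T.
Section Alex.
Variables (T : choiceType) (le : rel T).
HB.instance Definition _ := Choice.on (alex le).
Definition alex_open : set_system (alex le) :=
  fun D => forall x y : T, le x y -> D y -> D x.
Lemma alex_openT : alex_open setT. Proof. by []. Qed.
Lemma alex_openI : setI_closed alex_open.
Proof. by move=> A B hA hB x y lexy [/hA Ay /hB By]; split; [exact: Ay|exact: By]. Qed.
Lemma alex_open_bigU (I : Type) (f : I -> set (alex le)) :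
  (forall i, alex_open (f i)) -> alex_open (\bigcup_i f i).
Proof. by move=> hf x y lexy [i _ /hf fi]; exists i => //; exact: fi. Qed.
HB.instance Definition _ := isOpenTopological.Build (alex le)
  alex_openT alex_openI alex_open_bigU.
End Alex.

Local Open Scope ring_scope.

Definition homotopic (R : realType) (X Y : topologicalType) (f g : X -> Y) : Prop :=
  exists H : (X * subspace (`[0, 1]%classic : set R))%type -> Y,
    [/\ continuous H, (forall x : X, H (x, 0) = f x) & (forall x : X, H (x, 1) = g x)].

Definition homotopy_equivalent (R : realType) (X Y : topologicalType) : Prop :=
  exists (f : X -> Y) (g : Y -> X),
    [/\ continuous f, continuous g,
        homotopic R (g \o f) idfun & homotopic R (f \o g) idfun].

Local Close Scope ring_scope.
Local Open Scope order_scope.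

Section FiniteSpaces.
Context {d : Order.disp_t} {T : finPOrderType d}.


Definition is_open (D : {set T}) : Prop :=
  forall x y : T, x <= y -> y \in D -> x \in D.

(* X is the finite poset T (finite T0 space); its open sets are the down-sets *)
Definition minimal_open (x : T) : {set T} := [set y | y <= x].

Definition basis_B : {set {set T}} := [set minimal_open x | x : T].

Definition member (U : {set {set T}}) := {A : {set T} | A \in U}.
Definition fam_space (U : {set {set T}}) :=
  alex (fun A B : member U => val A \subset val B).

Definition open_cover (U : {set {set T}}) : Prop :=
  (forall A, A \in U -> is_open A) /\ (forall x, exists2 A, A \in U & x \in A).

Definition basis_like (U : {set {set T}}) : Prop :=
  forall A B x, A \in U -> B \in U -> x \in A :&: B ->
    exists2 W, W \in U & (x \in W) && (W \subset A :&: B).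

Definition in_Cov (U : {set {set T}}) : Prop := open_cover U /\ basis_like U.

Definition refines (U V : {set {set T}}) : Prop :=
  forall A, A \in U -> exists2 B, B \in V & A \subset B.

Definition geC (U V : {set {set T}}) : Prop :=
  refines U V /\
  exists p : member U -> member V,
    (forall A B : member U, val A \subset val B -> val (p A) \subset val (p B)) /\
    (forall A : member U, val A \subset val (p A)).

End FiniteSpaces.

(* Main.v *)
Require Import Defs.
From HB Require Import structures.
From mathcomp Require Import all_boot all_order all_algebra.
From mathcomp Require Import all_classical all_reals topology normedtype.
Import Order.TTheory GRing.Theory Num.Theory.
Import numFieldNormedType.Exports.
Local Open Scope classical_set_scope.
Local Open Scope ring_scope.

Lemma mono_cont (T1 T2 : choiceType) (l1 : rel T1) (l2 : rel T2)
  (f : alex l1 -> alex l2) :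
  (forall x y, l1 x y -> l2 (f x) (f y)) -> continuous f.
Proof.
move=> mf; apply/continuousP => A oA.
have {}oA : @alex_open _ l2 A := oA.
change (@alex_open _ l1 (f @^-1` A)) => x y lxy /= Ay.
exact: (oA _ _ (mf _ _ lxy) Ay).
Qed.

Lemma homotopic_le (R : realType) (X : topologicalType) (T : choiceType) (le : rel T)
  (f g : X -> alex le) : continuous f -> continuous g ->
  (forall x, le (g x) (f x)) -> homotopic R f g.
Proof.
move=> cf cg lgf.
pose H := fun z : (X * subspace (`[0, 1]%classic : set R))%type =>
  if (0 < z.2)%R then g z.1 else f z.1.
exists H; split; last first.
- by move=> x; rewrite /H /= ltr01.
- by move=> x; rewrite /H /= ltxx.
apply/continuousP => D oD.
have oD' : @alex_open _ le D := oD.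
have cfst : continuous (fun z : (X * subspace (`[0, 1]%classic : set R))%type => z.1).
  by move=> z; exact: cvg_fst.
have csnd : continuous (fun z : (X * subspace (`[0, 1]%classic : set R))%type => z.2).
  by move=> z; exact: cvg_snd.
set S := subspace (`[0, 1]%classic : set R).
have -> : H @^-1` D = ((g \o (fun z : (X * S)%type => z.1)) @^-1` D `&` (fun z : (X * S)%type => z.2) @^-1` [set t : R | (0 < t)%R])
   `|` (f \o (fun z : (X * S)%type => z.1)) @^-1` D.
  apply/seteqP; split => -[x t]; rewrite /H /=.
  - by case: ifP => t0 Dz; [left|right].
  - case=> [[Dg t0]|Df]; first by rewrite t0.
    by case: ifP => // _; exact: (oD' _ _ (lgf x) Df).
apply: openU; last first.
  by move/continuousP: (fun z => continuous_comp (cfst z) (cf _)) => /(_ _ oD).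
apply: openI.
  by move/continuousP: (fun z => continuous_comp (cfst z) (cg _)) => /(_ _ oD).
move/continuousP: csnd; apply.
apply: open_subspaceW; exact: open_gt.
Qed.

Local Close Scope ring_scope.
Local Open Scope order_scope.

Lemma minW (d : Order.disp_t) (T : finPOrderType d) (U : {set {set T}}) :
  in_Cov U -> forall x, exists A, [/\ A \in U, x \in A &
     forall B, B \in U -> x \in B -> A \subset B].
Proof.
move=> [[_ cov] bl] x.
have [A0 A0U xA0] := cov x.
have PA0 : (fun A : {set T} => (A \in U) && (x \in A)) A0 by rewrite A0U xA0.
case: (@arg_minnP _ A0 (fun A : {set T} => (A \in U) && (x \in A)) (fun A : {set T} => #|A|) PA0) => A /andP[AU xA] minA.
exists A; split => // B BU xB.
have xAB : x \in A :&: B by rewrite inE xA xB.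
have [W WU /andP[xW sW]] := bl A B x AU BU xAB.
have sWA : W \subset A by apply: fintype.subset_trans sW (subsetIl _ _).
have leAW : (#|A| <= #|W|)%N := minA W (introT andP (conj WU xW)).
have eWA : W = A.
  apply/eqP; rewrite eqEcard sWA /=; exact: leAW.
by rewrite -eWA; apply: fintype.subset_trans sW (subsetIr _ _).
Qed.

Theorem proposition3p3 (R : realType) (d : Order.disp_t) (T : finPOrderType d)
  (U : {set {set T}}) :
  in_Cov U -> geC U (@basis_B d T) ->
  homotopy_equivalent R (fam_space U) (fam_space (@basis_B d T)).
Proof.
move=> covU [_ [p [pmono psub]]].
pose Pb (S : {set T}) (W : member U) :=
  (S \subset val W) && [forall V : member U, (S \subset val V) ==> (val W \subset val V)].
have ex_g : forall A : member (@basis_B d T), exists W : member U, Pb (val A) W.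
  move=> [A /= /imsetP [x _ ->]].
  have [W0 [W0U xW0 minW0]] := @minW _ _ U covU x.
  have opW0 : is_open W0 by case: covU => [[op _] _]; exact: op.
  exists (exist _ W0 W0U); rewrite /Pb /=; apply/andP; split.
    apply/fintype.subsetP => y; rewrite inE => yx; exact: opW0 yx xW0.
  apply/forallP => V; apply/implyP => sV; apply: minW0; first exact: (valP V).
  by apply: (fintype.subsetP sV); rewrite inE.
pose g := fun A => xchoose (ex_g A).
have gP : forall A, Pb (val A) (g A) by move=> A; exact: xchooseP.
have gsub : forall A : member (@basis_B d T), val A \subset val (g A) by move=> A; case/andP: (gP A).
have gmin : forall (A : member (@basis_B d T)) (V : member U), val A \subset val V -> val (g A) \subset val V.
  by move=> A V sV; case/andP: (gP A) => _ /forallP /(_ V) /implyP; apply.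
have gmono : forall A B : member (@basis_B d T), val A \subset val B -> val (g A) \subset val (g B).
  by move=> A B sAB; apply: gmin; apply: fintype.subset_trans sAB (gsub B).
exists (p : fam_space U -> fam_space (@basis_B d T)).
exists (g : fam_space (@basis_B d T) -> fam_space U).
split.
- exact: mono_cont.
- exact: mono_cont.
- apply: homotopic_le.
  + by apply: mono_cont => A B sAB /=; apply: gmono; apply: pmono.
  + by apply: mono_cont.
  + by move=> A /=; apply: fintype.subset_trans (psub A) (gsub _).
- apply: homotopic_le.
  + by apply: mono_cont => A B sAB /=; apply: pmono; apply: gmono.
  + by apply: mono_cont.
  + by move=> A /=; apply: fintype.subset_trans (gsub A) (psub _).
Qed.
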